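(* Let $r\ge 2$, let $\pi$ be a set partition of $\{1,\dots,r\}$ having $\{1\}$ as a block, with $k$ blocks, and let $c\in\mathcal{C}(\pi)$. In the construction of $\psi_\pi(c)$ described in the context: (i) at Stage 1, the trees $\tau_1,\dots,\tau_k$ are $\pi$-increasing and irreducible; (ii) for $i=2,\dots,k$, in the input to Stage $i$, the trees $\tau_i,\dots,\tau_k$ are $\pi$-increasing, irreducible, and contain $\mu_i,\dots,\mu_k$ respectively; and if $\tau_1$ has been created by an internal splice at some previous stage, then $\tau_1$ is $\pi$-increasing and reducible; (iii) the tree $\psi_\pi(c)$ is $\pi$-increasing and reducible.
   Context: The blocks of $\pi$ are $\pi_1,\dots,\pi_k$ with maxima $\mu_i=\max\pi_i$, indexed so that $1=\mu_1<\dots<\mu_k=r$ (so $\pi_1=\{1\}$); $\pi^x$ denotes the block containing $x$. $\mathcal{C}(\pi)=\{(c_2,\dots,c_{k-1}):1\le c_i\le\mu_i\}$. An unordered increasing tree is a rooted tree on distinct positive integers, sons unordered, each son larger than its father. A $\pi$-increasing tree is an unordered increasing tree $T$ whose vertex-set is a union of blocks of $\pi$ and such that for any two elements $i<j$ of a same block of $\pi$ contained in $V(T)$, $i$ is an ancestor of $j$ in $T$. $v$-decomposition: for a vertex $v$ of $T$ with chain $a_1<\dots<a_\ell=v$ from the root to $v$, removing the chain edges leaves components $T^{(a_j)}$ rooted at $a_j$. Splice: for unordered increasing trees $T_1,T_2$ with disjoint vertex-sets and $v_1\in V(T_1)$, $v_2\in V(T_2)$, $v_1>v_2$, $\mathrm{spl}(T_1,v_1;T_2,v_2)$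 is the tree on $V(T_1)\cup V(T_2)$ obtained by merging the root-to-$v_1$ chain of $T_1$ and the root-to-$v_2$ chain of $T_2$ into one increasing chain (ending at $v_1$) and attaching at each chain vertex its component from the $v_1$-decomposition of $T_1$ or the $v_2$-decomposition of $T_2$. $v$-dependence graph $G_v(T)$ of a $\pi$-increasing tree $T$: directed graph on the blocks of $\pi$ contained in $V(T)$; for each such block $\pi_i$ whose maximum $\mu_i$ is not on the chain from the root to $v$, $\mu_i$ is a non-root vertex of a unique $T^{(a_j)}$ and there is an edge (possibly a loop) $\pi_i\to\pi^{a_j}$. A $\pi$-increasing tree with maximum vertex $M$ is irreducible if $G_M(T)$ is connected (ignoring directions), reducible otherwise. Construction of $\psi_\pi(c)$: Stage 1: $\tau_\ell$ is the increasing chain on the elements of $\pi_\ell$ ($\ell=1,\dots,k$), and $\nu=1$. For $i=2,\dots,k-1$ (Stage $i$): if $c_i$ is a vertex of $\tau_1$ or $\tau_i$ (Case 1, an internal splice), replace $\tau_1$ by $\mathrm{spl}(\tau_i,\mu_i;\tau_1,\nu)$, discard $\tau_i$, set $\nu=c_i$; otherwise $c_i$ lies in some $\tau_j$, $j>i$ (Case 2, an external splice), replace $\tau_j$ by $\mathrm{spl}(\tau_i,\mu_i;\tau_j,c_i)$ and discard $\tau_i$. Stage $k$ (also an internal splice): $\psi_\pi(c)=\mathrm{spl}(\tau_k,\mu_k;\tau_1,\nu)$. *)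

(* Defs.v *)
From mathcomp Require Import all_boot.
From Stdlib Require Import Relations.
Set Implicit Arguments.
Unset Strict Implicit.
Unset Printing Implicit Defensive.

(** * Unordered increasing trees, represented by a vertex list and a parent
    function.  The root is the minimum vertex; the parent of the root is
    irrelevant.  An unordered increasing tree on a finite set V of positive
    integers is exactly the data of a parent  p x < x, p x in V  for every
    non-root x in V. *)
Record itree := ITree { tV : seq nat; tpar : nat -> nat }.

Definition troot (T : itree) : nat := foldr minn (head 0 (tV T)) (tV T).

Definition inc_tree (T : itree) : Prop :=
  [/\ tV T != [::], all (fun x => 0 < x) (tV T) &
      forall x, x \in tV T -> x != troot T -> (tpar T x \in tV T) /\ tpar T x < x].

(* one step towards the root (0 once we leave the tree) *)
Definition up (T : itree) (x : nat) : nat :=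
  if (x \in tV T) && (x != troot T) then tpar T x else 0.

Definition anc (T : itree) (a x : nat) : bool :=
  [&& a \in tV T, x \in tV T & a \in traject (up T) x x.+1].

Definition chain (T : itree) (v : nat) : seq nat := [seq a <- tV T | anc T a v].

(* root a_j of the component T^(a_j) of the v-decomposition containing x *)
Definition comp (T : itree) (v x : nat) : nat :=
  \max_(a <- chain T v | anc T a x) a.

(* splice spl(T1,v1;T2,v2): merged chain, components kept attached *)
Definition spl (T1 : itree) (v1 : nat) (T2 : itree) (v2 : nat) : itree :=
  let ch := chain T1 v1 ++ chain T2 v2 in
  ITree (tV T1 ++ tV T2)
    (fun x => if x \in ch then \max_(a <- ch | a < x) a
              else if x \in tV T1 then tpar T1 x else tpar T2 x).

(** * Set partitions, given as the list of blocks pi_1,...,pi_k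
    (1-indexed: blk P i = pi_i). *)
Definition blk (P : seq (seq nat)) (i : nat) : seq nat := nth [::] P i.-1.
Definition mu (P : seq (seq nat)) (i : nat) : nat := \max_(x <- blk P i) x.
Definition blkof (P : seq (seq nat)) (x : nat) : nat :=
  (find (fun b => x \in b) P).+1.

Definition set_partition1 (r : nat) (P : seq (seq nat)) : Prop :=
  [/\ forall i, 1 <= i <= size P -> blk P i != [::],
      forall x, (1 <= x <= r) <-> (exists2 i, 1 <= i <= size P & x \in blk P i),
      forall x i j, 1 <= i <= size P -> 1 <= j <= size P ->
        x \in blk P i -> x \in blk P j -> i = j,
      exists2 i, 1 <= i <= size P & blk P i =i [:: 1] &
      forall i, 1 <= i < size P -> mu P i < mu P i.+1].

Definition pi_incr (P : seq (seq nat)) (T : itree) : Prop :=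
  [/\ inc_tree T,
      forall x, x \in tV T -> {subset blk P (blkof P x) <= tV T} &
      forall i j, i \in tV T -> j \in tV T -> blkof P i = blkof P j -> i < j ->
        anc T i j].

Definition dep_edge (P : seq (seq nat)) (T : itree) (v : nat) (i j : nat) : Prop :=
  [/\ 1 <= i <= size P, {subset blk P i <= tV T},
      mu P i \notin chain T v & j = blkof P (comp T v (mu P i))].

Definition maxv (T : itree) : nat := \max_(x <- tV T) x.

Definition irreducible (P : seq (seq nat)) (T : itree) : Prop :=
  forall i j, 1 <= i <= size P -> 1 <= j <= size P ->
    {subset blk P i <= tV T} -> {subset blk P j <= tV T} ->
    clos_refl_sym_trans nat (dep_edge P T (maxv T)) i j.

Record cstate := CState {
  taus : nat -> itree;
  nu : nat;
  t1spliced : bool          (* tau_1 created by an internal splice *)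
}.

Definition chain_tree (b : seq nat) : itree :=
  ITree b (fun x => \max_(y <- b | y < x) y).

Definition init (P : seq (seq nat)) : cstate :=
  CState (fun l => chain_tree (blk P l)) 1 false.

Definition upd (f : nat -> itree) (j : nat) (t : itree) : nat -> itree :=
  fun l => if l == j then t else f l.

(* Stage i, 2 <= i <= k-1 *)
Definition stage (P : seq (seq nat)) (c : nat -> nat) (i : nat) (s : cstate) : cstate :=
  let ti := taus s i in
  let t1 := taus s 1 in
  if (c i \in tV t1) || (c i \in tV ti) then
    CState (upd (taus s) 1 (spl ti (mu P i) t1 (nu s))) (c i) true
  else
    let j := i.+1 + find (fun j => c i \in tV (taus s j)) (iota i.+1 (size P - i)) in
    CState (upd (taus s) j (spl ti (mu P i) (taus s j) (c i))) (nu s) (t1spliced s).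

(* input to Stage i: after Stage 1 and Stages 2..i-1 *)
Definition state_before (P : seq (seq nat)) (c : nat -> nat) (i : nat) : cstate :=
  foldl (fun s j => stage P c j s) (init P) (iota 2 (i - 2)).

Definition psi (P : seq (seq nat)) (c : nat -> nat) : itree :=
  let k := size P in
  let s := state_before P c k in
  spl (taus s k) (mu P k) (taus s 1) (nu s).

(* Main.v *)
Require Import Defs.
From mathcomp Require Import all_boot.
From Stdlib Require Import Relations.
From mathcomp Require Import zify.
Require Import Defs.
Set Implicit Arguments.
Unset Strict Implicit.
Unset Printing Implicit Defensive.


Lemma bigmax_char (s : seq nat) (p : pred nat) m :
  m \in s -> p m -> (forall a, a \in s -> p a -> a <= m) ->
  \max_(a <- s | p a) a = m.
Proof.
move=> ms pm H; apply/eqP; rewrite eqn_leq; apply/andP; split.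
- by apply/bigmax_leqP_seq => a /H.
- exact: (leq_bigmax_seq _ ms pm).
Qed.

Lemma bigmax_ex (s : seq nat) (p : pred nat) :
  has p s -> (\max_(a <- s | p a) a) \in s /\ p (\max_(a <- s | p a) a).
Proof.
move=> /hasP [a0 a0s pa0].
have : (\max_(a <- s | p a) a) = 0 \/ ((\max_(a <- s | p a) a) \in s /\ p (\max_(a <- s | p a) a)).
  rewrite big_seq_cond; apply: (big_ind (fun x => x = 0 \/ (x \in s /\ p x))); first by left.
  - by move=> x y Hx Hy; case: (leqP x y).
  - by move=> i /andP [] *; right.
case=> // H0; have := @leq_bigmax_seq _ s p (fun a => a) a0 a0s pa0; rewrite H0 leqn0 => /eqP a00.
by rewrite -a00.
Qed.

Lemma foldr_minn_le d s x : x \in s -> foldr minn d s <= x.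
Proof.
elim: s => [|h t IH] //=; rewrite inE => /orP [/eqP->|/IH H].
- exact: geq_minl.
- exact: leq_trans (geq_minr _ _) H.
Qed.

Lemma foldr_minn_mem d s : foldr minn d s \in d :: s.
Proof.
elim: s => [|h t IH] /=; first by rewrite inE.
case: (leqP h (foldr minn d t)) => H.
- by rewrite !inE eqxx orbT.
- move: IH; rewrite !inE => /orP [->|->] //;
  by rewrite !orbT.
Qed.

Lemma troot_le T x : x \in tV T -> troot T <= x.
Proof. exact: foldr_minn_le. Qed.

Lemma troot_mem T : tV T != [::] -> troot T \in tV T.
Proof.
rewrite /troot; case: (tV T) => [|h t] //= _.
have := foldr_minn_mem h (h :: t); rewrite /= inE => /orP [/eqP ->|//].
by rewrite inE eqxx.
Qed.

Lemma troot_uniq T y : y \in tV T -> (forall x, x \in tV T -> y <= x) -> troot T = y.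
Proof.
move=> yT H; apply/eqP; rewrite eqn_leq troot_le // H //.
by apply: troot_mem; case: (tV T) yT.
Qed.

Section Tree.
Variable T : itree.
Hypothesis HT : inc_tree T.

Local Notation V := (tV T).
Local Notation root := (troot T).
Local Notation par := (tpar T).

Lemma root_in : root \in V.
Proof. by case: HT => H _ _; apply: troot_mem. Qed.

Lemma root_le x : x \in V -> root <= x.
Proof. exact: troot_le. Qed.

Lemma par_in x : x \in V -> x != root -> par x \in V /\ par x < x.
Proof. by case: HT => _ _ H; apply: H. Qed.

Lemma pos_in x : x \in V -> 0 < x.
Proof. by case: HT => _ /allP H _; apply: H. Qed.

Lemma zero_notin : 0 \notin V.
Proof. by apply/negP => /pos_in. Qed.

Lemma up_zero : up T 0 = 0.
Proof. by rewrite /up (negbTE zero_notin). Qed.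

Lemma iter_up_zero n : iter n (up T) 0 = 0.
Proof. by elim: n => //= n ->; exact: up_zero. Qed.

Lemma iter_up_le x n : x \in V -> iter n (up T) x \in V -> iter n (up T) x + n <= x.
Proof.
move=> xV; elim: n => [|n IH] /=; first by rewrite addn0.
move: IH; set y := iter n (up T) x => IH.
rewrite {1 2}/up; case: ifP => [/andP [yV yr] H|_]; last by rewrite (negbTE zero_notin).
have [_ lt] := par_in yV yr; have := IH yV; lia.
Qed.

Lemma ancP a x : anc T a x <-> [/\ a \in V, x \in V & exists n, iter n (up T) x = a].
Proof.
rewrite /anc; split.
- case/and3P => aV xV /trajectP [n _ an]; subst a; split => //; by exists n.
- case => aV xV [n Hn]; apply/and3P; split => //; apply/trajectP; exists n => //.
  have := @iter_up_le x n xV; rewrite Hn => /(_ aV); lia.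
Qed.

Lemma anc_inl a x : anc T a x -> a \in V.
Proof. by case/ancP. Qed.
Lemma anc_inr a x : anc T a x -> x \in V.
Proof. by case/ancP. Qed.

Lemma anc_refl x : x \in V -> anc T x x.
Proof. by move=> xV; apply/ancP; split => //; exists 0. Qed.

Lemma anc_trans a b x : anc T a b -> anc T b x -> anc T a x.
Proof.
move=> /ancP [aV bV [n Hn]] /ancP [_ xV [m Hm]]; apply/ancP; split => //.
by exists (n + m); rewrite iterD Hm.
Qed.

Lemma anc_le a x : anc T a x -> a <= x.
Proof.
move=> /ancP [aV xV [n Hn]]; have := @iter_up_le x n xV; rewrite Hn => /(_ aV); lia.
Qed.

Lemma anc_total a b x : anc T a x -> anc T b x -> anc T a b \/ anc T b a.
Proof.
move=> /ancP [aV xV [n Hn]] /ancP [bV _ [m Hm]].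
case: (leqP n m) => H.
- right; apply/ancP; split => //; exists (m - n).
  by rewrite -Hm -Hn -iterD subnK.
- left; apply/ancP; split => //; exists (n - m).
  by rewrite -Hm -Hn -iterD subnK // ltnW.
Qed.

Lemma anc_rec a x : x \in V ->
  anc T a x <-> a = x \/ (x != root /\ anc T a (par x)).
Proof.
move=> xV; split.
- case/ancP => aV _ [[|n] Hn]; first by left.
  right; move: Hn; rewrite iterSr.
  have -> : up T x = if x != root then par x else 0 by rewrite /up xV.
  case: (boolP (x == root)) => /= xr Hn.
  + by move: aV; rewrite -Hn iter_up_zero (negbTE zero_notin).
  + split => //; have [pV _] := par_in xV xr.
    by apply/ancP; split => //; exists n.
- case => [->|[xr /ancP [aV pV [n Hn]]]]; first exact: anc_refl.
  apply/ancP; split => //; exists n.+1; rewrite iterSr.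
  have -> : up T x = par x by rewrite /up xV xr.
  exact: Hn.
Qed.

Lemma anc_root x : x \in V -> anc T root x.
Proof.
elim/ltn_ind: x => x IH xV; apply/anc_rec => //.
case: (boolP (x == root)) => [/eqP ->|xr]; first by left.
right; split => //; have [pV lt] := par_in xV xr; exact: IH.
Qed.

Lemma anc_antisym a b : anc T a b -> anc T b a -> a = b.
Proof. by move=> /anc_le H1 /anc_le H2; apply/eqP; rewrite eqn_leq H1 H2. Qed.

Lemma anc_par x : x \in V -> x != root -> anc T (par x) x.
Proof.
move=> xV xr; have [pV _] := par_in xV xr; apply/anc_rec => //.
right; split => //; exact: anc_refl.
Qed.

Lemma chain_le a b v : anc T a v -> anc T b v -> a <= b -> anc T a b.
Proof.
move=> av bv ab; case: (anc_total av bv) => // ba.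
have := anc_le ba => ba'; have -> : a = b by apply/eqP; rewrite eqn_leq ab ba'.
exact: anc_refl (anc_inl bv).
Qed.

Lemma in_chain v a : (a \in chain T v) = anc T a v.
Proof.
rewrite /chain mem_filter; apply/andP/idP => [[]//|H]; split => //; exact: anc_inl H.
Qed.

Lemma comp_spec v x : v \in V -> x \in V ->
  [/\ anc T (comp T v x) v, anc T (comp T v x) x &
      forall a, anc T a v -> anc T a x -> a <= comp T v x].
Proof.
move=> vV xV.
have hs : has (fun a => anc T a x) (chain T v).
  by apply/hasP; exists root; rewrite ?in_chain; apply: anc_root.
have [H1 H2] := bigmax_ex hs; rewrite in_chain in H1.
split => // a av ax; apply: leq_bigmax_seq => //; by rewrite in_chain.
Qed.

Lemma comp_char v x m : anc T m v -> anc T m x ->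
  (forall a, anc T a v -> anc T a x -> a <= m) -> comp T v x = m.
Proof.
move=> mv mx H; apply: bigmax_char; rewrite ?in_chain //.
by move=> a; rewrite in_chain; apply: H.
Qed.

Lemma comp_par v x : v \in V -> x \in V -> ~~ anc T x v -> x != root ->
  comp T v (par x) = comp T v x.
Proof.
move=> vV xV xv xr; have [c1 c2 c3] := comp_spec vV xV.
apply: comp_char => //.
- move/(anc_rec _ xV): c2 => [E|[_ //]]; by move: xv; rewrite -E c1.
- move=> a av ap; apply: c3 => //; exact: anc_trans ap (anc_par xV xr).
Qed.

Lemma linear_anc (s : seq nat) : {subset s <= V} -> root \in s ->
  (forall x, x \in s -> x != root -> par x = \max_(a <- s | a < x) a) ->
  forall y, y \in s -> forall a, anc T a y <-> (a \in s /\ a <= y).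
Proof.
move=> sV rs Hp; elim/ltn_ind => y IH ys a.
have yV := sV _ ys; rewrite anc_rec //.
case: (boolP (y == root)) => [/eqP ->|yr].
- split.
  + by case => [->|[H _]]; [split | ].
  + case => aS ay; left; apply/eqP; rewrite eqn_leq ay root_le //; exact: sV.
- have hs : has (fun a => a < y) s.
    apply/hasP; exists root => //; rewrite ltn_neqAle eq_sym yr root_le //.
  have [pm plt] := bigmax_ex hs; rewrite -Hp // in pm plt.
  rewrite (IH _ plt pm); split.
  + case => [->|[_ [aS ap]]]; first by split.
    by split => //; apply: leq_trans ap (ltnW plt).
  + case => aS ay; case: (boolP (a == y)) => [/eqP ->|ay']; first by left.
    right; split => //; split => //; rewrite Hp //.
    by apply: leq_bigmax_seq => //; rewrite ltn_neqAle ay' ay.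
Qed.

End Tree.


Section Splice.
Variables (T1 T2 : itree) (v1 v2 : nat).
Hypotheses (H1 : inc_tree T1) (H2 : inc_tree T2).
Hypothesis disj : forall x, x \in tV T1 -> x \notin tV T2.
Lemma disj' x : x \in tV T2 -> x \notin tV T1.
Proof. by apply: contraTN => /disj. Qed.
Hypotheses (v1T : v1 \in tV T1) (v2T : v2 \in tV T2).

Local Notation T := (spl T1 v1 T2 v2).
Local Notation ch := (chain T1 v1 ++ chain T2 v2).

Lemma spl_V x : (x \in tV T) = (x \in tV T1) || (x \in tV T2).
Proof. by rewrite /= mem_cat. Qed.

Lemma in_ch x : (x \in ch) = anc T1 x v1 || anc T2 x v2.
Proof. by rewrite mem_cat !in_chain. Qed.

Lemma spl_root_ch : troot T \in ch.
Proof.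
have ne : tV T != [::] by case: H1 => ne _ _; rewrite /=; case: (tV T1) ne.
have := troot_mem ne; rewrite spl_V => /orP [rT|rT].
- have E : troot T = troot T1.
    apply/eqP; rewrite eqn_leq (troot_le rT) andbT; apply: troot_le; rewrite spl_V (root_in H1) //.
  by rewrite in_ch E anc_root.
- have E : troot T = troot T2.
    apply/eqP; rewrite eqn_leq (troot_le rT) andbT; apply: troot_le; rewrite spl_V (root_in H2) ?orbT //.
  by rewrite in_ch E anc_root ?orbT.
Qed.

Lemma ch_V x : x \in ch -> x \in tV T.
Proof. by rewrite in_ch spl_V => /orP [/anc_inl ->|/anc_inl ->]; rewrite ?orbT. Qed.

Lemma spl_par_ch x : x \in ch -> tpar T x = \max_(a <- ch | a < x) a.
Proof. by rewrite /= => ->. Qed.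

Lemma spl_par1 x : x \notin ch -> x \in tV T1 -> tpar T x = tpar T1 x.
Proof. by rewrite /= => /negbTE -> ->. Qed.

Lemma spl_par2 x : x \notin ch -> x \in tV T2 -> tpar T x = tpar T2 x.
Proof.
move=> /negbTE xc xT; rewrite /= xc.
by case: ifP => // /disj; rewrite xT.
Qed.

Lemma root1_ch : troot T1 \in ch.
Proof. by rewrite in_ch anc_root. Qed.
Lemma root2_ch : troot T2 \in ch.
Proof. by rewrite in_ch (anc_root H2) ?orbT. Qed.

Lemma spl_inc : inc_tree T.
Proof.
split.
- by case: H1 => ne _ _; rewrite /=; case: (tV T1) ne.
- by rewrite all_cat; case: H1 => _ -> _; case: H2 => _ -> _.
- move=> x xT xr; case: (boolP (x \in ch)) => xc.
  + have hs : has (fun a => a < x) ch.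
      apply/hasP; exists (troot T); first exact: spl_root_ch.
      by rewrite ltn_neqAle eq_sym xr troot_le.
    have [m1 m2] := bigmax_ex hs; rewrite spl_par_ch //; split => //; exact: ch_V.
  + move: xT; rewrite spl_V => /orP [xT|xT].
    * rewrite spl_par1 //.
      have xr1 : x != troot T1 by apply: contraNneq xc => ->; exact: root1_ch.
      by have [p1 p2] := par_in H1 xT xr1; rewrite spl_V p1.
    * rewrite spl_par2 //.
      have xr2 : x != troot T2 by apply: contraNneq xc => ->; exact: root2_ch.
      by have [p1 p2] := par_in H2 xT xr2; rewrite spl_V p1 orbT.
Qed.

Lemma spl_chain_anc y a : y \in ch -> anc T a y <-> (a \in ch /\ a <= y).
Proof.
move=> yc; apply: (linear_anc spl_inc) => //.
- exact: ch_V.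
- exact: spl_root_ch.
- by move=> x xc _; apply: spl_par_ch.
Qed.

Lemma spl_anc1 x a : x \in tV T1 ->
  anc T a x <-> anc T1 a x \/ (a \in chain T2 v2 /\ a < comp T1 v1 x).
Proof.
elim/ltn_ind: x a => x IH a xT.
case: (boolP (anc T1 x v1)) => xv.
- have E : comp T1 v1 x = x.
    apply: comp_char => //; first exact: anc_refl.
    by move=> b _; apply: anc_le.
  rewrite E spl_chain_anc ?in_ch ?xv //; split.
  + case => /orP [av|av] ax.
    * by left; apply: (chain_le H1 av xv).
    * right; rewrite (in_chain H2); split => //; rewrite ltn_neqAle ax andbT.
      by apply: contraTneq xT => <-; apply: disj'; exact: anc_inl av.
  + case => [ax|[ac ax]].
    * by rewrite (anc_trans H1 ax xv) (anc_le H1 ax).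
    * by rewrite -(in_chain H2) ac orbT (ltnW ax).
- have xc : x \notin ch.
    rewrite in_ch negb_or xv /=; apply: contraTN xT => /(anc_inl H2); exact: disj'.
  have xr : x != troot T by apply: contraNneq xc => ->; exact: spl_root_ch.
  have xr1 : x != troot T1 by apply: contraNneq xc => ->; exact: root1_ch.
  have [pT plt] := par_in H1 xT xr1.
  rewrite (anc_rec spl_inc) ?spl_V ?xT // (anc_rec H1) // spl_par1 //.
  rewrite (IH _ plt a pT) (comp_par H1) //.
  split.
  + case => [->|[_ [h|h]]]; [by left; left | by left; right | by right].
  + case => [[->|[_ h]]|h]; [by left | by right; split => //; left | by right; split => //; right].
Qed.

End Splice.

Section Swap.
Variables (T1 T2 : itree) (v1 v2 : nat).
Hypotheses (H1 : inc_tree T1) (H2 : inc_tree T2).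
Hypothesis disj : forall x, x \in tV T1 -> x \notin tV T2.
Hypotheses (v1T : v1 \in tV T1) (v2T : v2 \in tV T2).

Let disj2 := disj' disj.
Let I1 := spl_inc H1 H2 disj v1T v2T.
Let I2 := spl_inc H2 H1 disj2 v2T v1T.

Lemma spl_up_swap x : up (spl T1 v1 T2 v2) x = up (spl T2 v2 T1 v1) x.
Proof.
have EV y : (y \in tV (spl T1 v1 T2 v2)) = (y \in tV (spl T2 v2 T1 v1)).
  by rewrite !spl_V orbC.
have Er : troot (spl T1 v1 T2 v2) = troot (spl T2 v2 T1 v1).
  apply: troot_uniq; first by rewrite EV; apply: (root_in I2).
  by move=> y; rewrite EV; apply: troot_le.
rewrite /up EV Er; case: ifP => // /andP [xT _].
case: (boolP (x \in chain T1 v1 ++ chain T2 v2)) => xc.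
- rewrite spl_par_ch // spl_par_ch; last by rewrite mem_cat orbC -mem_cat.
  by apply: perm_big; rewrite perm_catC.
- have xc' : x \notin chain T2 v2 ++ chain T1 v1 by rewrite mem_cat orbC -mem_cat.
  move: xT; rewrite spl_V => /orP [xT|xT].
  + by rewrite spl_par2 // spl_par1.
  + by rewrite spl_par1 // spl_par2.
Qed.

Lemma spl_anc_swap a x : anc (spl T1 v1 T2 v2) a x <-> anc (spl T2 v2 T1 v1) a x.
Proof.
rewrite (ancP I1) (ancP I2) !spl_V; split.
- case => aV xV [n Hn]; split; rewrite 1?orbC //; exists n.
  by rewrite -Hn; apply: eq_iter => y; rewrite spl_up_swap.
- case => aV xV [n Hn]; split; rewrite 1?orbC //; exists n.
  by rewrite -Hn; apply: eq_iter => y; rewrite spl_up_swap.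
Qed.

Lemma spl_anc2 x a : x \in tV T2 ->
  anc (spl T1 v1 T2 v2) a x <-> anc T2 a x \/ (a \in chain T1 v1 /\ a < comp T2 v2 x).
Proof.
move=> xT; rewrite spl_anc_swap; exact: (spl_anc1 H2 H1 disj2 v2T v1T).
Qed.

End Swap.


Lemma crst_mono (R R' : relation nat) x y :
  (forall a b, R a b -> R' a b) -> clos_refl_sym_trans nat R x y ->
  clos_refl_sym_trans nat R' x y.
Proof.
move=> H; elim => {x y} [x y /H|x|x y _ IH|x y z _ IH1 _ IH2].
- by apply: rst_step.
- exact: rst_refl.
- exact: rst_sym.
- exact: rst_trans IH1 IH2.
Qed.

Section Part.
Variables (r : nat) (P : seq (seq nat)).
Hypothesis HP : set_partition1 r P.
Local Notation k := (size P).

Lemma blkofP x : 1 <= x <= r -> 1 <= blkof P x <= k /\ x \in blk P (blkof P x).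
Proof.
case: HP => _ Hcov _ _ _ xr; have [i /andP [i1 ik] xi] := (Hcov x).1 xr.
have hs : has (fun b => x \in b) P.
  apply/hasP; exists (nth [::] P i.-1) => //; apply: mem_nth; move: i1 ik xi; case: i => //.
rewrite /blkof /blk /=; split; last exact: (nth_find [::] hs).
by rewrite has_find in hs.
Qed.

Lemma blk_rng x i : 1 <= i <= k -> x \in blk P i -> 1 <= x <= r.
Proof. by case: HP => _ Hcov _ _ _ ik xi; apply/(Hcov x); exists i. Qed.

Lemma blkof_eq x i : 1 <= i <= k -> x \in blk P i -> blkof P x = i.
Proof.
move=> ik xi; have [bk xb] := blkofP (blk_rng ik xi).
by case: HP => _ _ Hu _ _; apply: (Hu x).
Qed.

Lemma blk_ne i : 1 <= i <= k -> blk P i != [::].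
Proof. by case: HP => H _ _ _ _; apply: H. Qed.

Lemma mu_in i : 1 <= i <= k -> mu P i \in blk P i.
Proof.
move=> ik; have := blk_ne ik; case E: (blk P i) => [|h t] // _.
have hs : has (fun _ => true) (blk P i) by rewrite E.
by have [H _] := bigmax_ex hs; move: H; rewrite /mu E.
Qed.

Lemma le_mu x i : x \in blk P i -> x <= mu P i.
Proof. by move=> xi; apply: (@leq_bigmax_seq _ _ (fun _ => true) (fun a => a)). Qed.

Lemma mu_lt i j : 1 <= i -> i < j -> j <= k -> mu P i < mu P j.
Proof.
move=> i1; elim: j => [|j IH] //; rewrite ltnS leq_eqVlt => /orP [/eqP <-|ij] jk.
- by case: HP => _ _ _ _ H; apply: H; lia.
- apply: ltn_trans (IH ij (ltnW jk)) _; case: HP => _ _ _ _ H; apply: H; lia.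
Qed.

Lemma blk1 : 2 <= r -> 1 \in blk P 1 /\ 2 <= k.
Proof.
move=> r2; case: HP => _ Hcov _ [i0 /andP [i01 i0k] Hi0] _.
have mu0 : mu P i0 = 1.
  by have := mu_in (i:=i0); rewrite Hi0 inE i01 i0k => /(_ is_true_true) /eqP.
have i01' : i0 = 1.
  case: (leqP i0 1) => [le|lt]; first lia; exfalso.
  have := mu_lt (leqnn 1) lt i0k; rewrite mu0 ltnS leqn0 => /eqP m0.
  have k1 : 1 <= 1 <= k by lia.
  by have := blk_rng k1 (mu_in k1); rewrite m0.
subst i0; split; first by rewrite Hi0 inE.
have r2' : 1 <= 2 <= r by lia.
have [/andP [b1 bk] xb] := blkofP r2'.
case: (boolP (blkof P 2 == 1)) => [/eqP E|E].
- by move: xb; rewrite E Hi0.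
- lia.
Qed.

Definition rng (T : itree) := forall x, x \in tV T -> 1 <= x <= r.

Lemma pi_clos T x : pi_incr P T -> x \in tV T -> {subset blk P (blkof P x) <= tV T}.
Proof. by case=> _ H _; apply: H. Qed.

Lemma blk_sub T i x : pi_incr P T -> 1 <= i <= k -> x \in blk P i -> x \in tV T ->
  {subset blk P i <= tV T}.
Proof. by move=> pT ik xi xT; rewrite -(blkof_eq ik xi); apply: pi_clos. Qed.

Lemma blk_ofT T x : pi_incr P T -> rng T -> x \in tV T ->
  [/\ 1 <= blkof P x <= k, x \in blk P (blkof P x), {subset blk P (blkof P x) <= tV T}
   & mu P (blkof P x) \in tV T].
Proof.
move=> pT rT xT; have [bk xb] := blkofP (rT _ xT).
have sub := pi_clos pT xT; split => //; apply: sub; exact: mu_in.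
Qed.

Section SplP.
Variables (T1 T2 : itree) (v1 v2 : nat).
Hypotheses (P1 : pi_incr P T1) (P2 : pi_incr P T2).
Hypothesis disj : forall x, x \in tV T1 -> x \notin tV T2.
Hypotheses (v1T : v1 \in tV T1) (v2T : v2 \in tV T2).
Hypotheses (R1 : rng T1) (R2 : rng T2).

Let H1 : inc_tree T1. Proof. by case: P1. Qed.
Let H2 : inc_tree T2. Proof. by case: P2. Qed.
Let disj2 := disj' disj.
Local Notation T := (spl T1 v1 T2 v2).
Let I := spl_inc H1 H2 disj v1T v2T.

Lemma spl_rng : rng T.
Proof. by move=> x; rewrite spl_V => /orP [/R1|/R2]. Qed.

Lemma spl_blk_split i : 1 <= i <= k -> {subset blk P i <= tV T} ->
  {subset blk P i <= tV T1} \/ {subset blk P i <= tV T2}.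
Proof.
move=> ik sub; have mi := mu_in ik; have := sub _ mi; rewrite spl_V => /orP [mT|mT].
- by left; apply: blk_sub mi mT.
- by right; apply: blk_sub mi mT.
Qed.

Lemma sub1 : {subset tV T1 <= tV T}.
Proof. by move=> x xT; rewrite spl_V xT. Qed.
Lemma sub2 : {subset tV T2 <= tV T}.
Proof. by move=> x xT; rewrite spl_V xT orbT. Qed.

Lemma spl_pi_incr : pi_incr P T.
Proof.
split; first exact: I.
- move=> x; rewrite spl_V => /orP [xT|xT] y yb.
  + by apply: sub1; apply: pi_clos yb.
  + by apply: sub2; apply: pi_clos yb.
- move=> i j; rewrite !spl_V => /orP [iT|iT] jT E lt.
  + have [_ _ sub _] := blk_ofT P1 R1 iT.
    have jT1 : j \in tV T1.
      apply: sub; rewrite E; have [] := blkofP (spl_rng (x:=j) _) => //; by rewrite spl_V.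
    have a1 : anc T1 i j by case: P1 => _ _ H; apply: H.
    by apply/(spl_anc1 H1 H2 disj v1T v2T i jT1); left.
  + have [_ _ sub _] := blk_ofT P2 R2 iT.
    have jT2 : j \in tV T2.
      apply: sub; rewrite E; have [] := blkofP (spl_rng (x:=j) _) => //; by rewrite spl_V.
    have a2 : anc T2 i j by case: P2 => _ _ H; apply: H.
    by apply/(spl_anc2 H1 H2 disj v1T v2T i jT2); left.
Qed.

Lemma maxv_char T0 m : m \in tV T0 -> (forall x, x \in tV T0 -> x <= m) -> maxv T0 = m.
Proof. by move=> mT H; rewrite /maxv (bigmax_char (p := fun _ => true) mT) // => x xT _; apply: H. Qed.

Lemma spl_reducible : v2 < v1 -> (forall x, x \in tV T1 -> x <= v1) ->
  (forall x, x \in tV T2 -> x < v1) -> ~ irreducible P T.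
Proof.
move=> v21 b1 b2.
have Mv : maxv T = v1.
  apply: maxv_char; first exact: sub1.
  by move=> x; rewrite spl_V => /orP [/b1|/b2 /ltnW].
have v1c : v1 \in chain T1 v1 ++ chain T2 v2 by rewrite (in_ch v1 v2 H1 H2) (anc_refl H1 v1T).
have chE a : anc T a v1 <-> a \in chain T1 v1 ++ chain T2 v2.
  rewrite (spl_chain_anc H1 H2 disj v1T v2T a v1c); split => [[]//|ac]; split => //.
  by move: ac; rewrite (in_ch v1 v2 H1 H2) => /orP [/(anc_inl (H1)) /b1|/(anc_inl (H2)) /b2 /ltnW].
have c1E y : y \in tV T1 -> comp T v1 y = comp T1 v1 y.
  move=> yT; have [c1 c2 c3] := comp_spec H1 v1T yT.
  apply: (comp_char I).
  - by apply/chE; rewrite (in_ch v1 v2 H1 H2) c1.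
  - by apply/(spl_anc1 H1 H2 disj v1T v2T _ yT); left.
  - move=> a /chE ac /(spl_anc1 H1 H2 disj v1T v2T _ yT) [ay|[_ lt]]; last exact: ltnW.
    move: ac; rewrite (in_ch v1 v2 H1 H2) => /orP [av|av]; first exact: c3.
    by move: (disj (anc_inl H1 ay)); rewrite (anc_inl H2 av).
have c2E y : y \in tV T2 -> comp T v1 y = comp T2 v2 y.
  move=> yT; have [c1 c2 c3] := comp_spec H2 v2T yT.
  apply: (comp_char I).
  - by apply/chE; rewrite (in_ch v1 v2 H1 H2) c1 orbT.
  - by apply/(spl_anc2 H1 H2 disj v1T v2T _ yT); left.
  - move=> a /chE ac /(spl_anc2 H1 H2 disj v1T v2T _ yT) [ay|[_ lt]]; last exact: ltnW.
    move: ac; rewrite (in_ch v1 v2 H1 H2) => /orP [av|av]; last exact: c3.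
    by move: (disj (anc_inl H1 av)); rewrite (anc_inl H2 ay).
pose Q b := mu P b \in tV T1.
have edge i j : dep_edge P T v1 i j -> Q i = Q j.
  case=> ik sub _ ->; have mT := sub _ (mu_in ik).
  move: mT; rewrite spl_V => /orP [mT|mT].
  + rewrite c1E //; have [c1 _ _] := comp_spec H1 v1T mT.
    have [_ _ _ m1] := blk_ofT P1 R1 (anc_inl H1 c1); by rewrite /Q mT m1.
  + rewrite c2E //; have [c1 _ _] := comp_spec H2 v2T mT.
    have [_ _ _ m2] := blk_ofT P2 R2 (anc_inl H2 c1).
    by rewrite /Q (negbTE (disj2 mT)) (negbTE (disj2 m2)).
move=> irr.
have [bk1 vb1 sb1 mb1] := blk_ofT P1 R1 v1T.
have [bk2 vb2 sb2 mb2] := blk_ofT P2 R2 v2T.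
have := irr _ _ bk1 bk2 (fun x h => sub1 (sb1 x h)) (fun x h => sub2 (sb2 x h)).
rewrite Mv => C.
have : Q (blkof P v1) = Q (blkof P v2).
  elim: C => {bk1 bk2 vb1 vb2 sb1 sb2 mb1 mb2} [x y /edge //|//|x y _ -> //|x y z _ -> _ -> //].
by rewrite /Q mb1 (negbTE (disj2 mb2)).
Qed.

Lemma spl_irreducible : v2 < v1 -> (forall x, x \in tV T1 -> x <= v1) ->
  (forall x, x \in tV T1 -> x < maxv T2) ->
  irreducible P T1 -> irreducible P T2 -> irreducible P T.
Proof.
move=> v21 b1 bM irr1 irr2.
set M := maxv T2.
have hs2 : has (fun _ => true) (tV T2) by apply/hasP; exists v2.
have MT : M \in tV T2 by have [] := bigmax_ex hs2.
have leM x : x \in tV T2 -> x <= M.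
  by move=> xT; apply: (@leq_bigmax_seq _ _ (fun _ => true) (fun a => a)).
have Mv : maxv T = M.
  apply: maxv_char; first exact: sub2.
  by move=> x; rewrite spl_V => /orP [/bM /ltnW|/leM].
have Mv1 : maxv T1 = v1 by apply: maxv_char.
have [d1 d2 d3] := comp_spec H2 v2T MT.
set d := comp T2 v2 M in d1 d2 d3.
have dT : d \in tV T2 := anc_inl H2 d1.
have dv : d <= v2 := anc_le H2 d1.
have A1 := spl_anc1 H1 H2 disj v1T v2T.
have A2 := spl_anc2 H1 H2 disj v1T v2T.
have chT1 a : a \in tV T1 -> anc T a M <-> (anc T1 a v1 /\ a < d).
  move=> aT; rewrite (A2 _ _ MT); split.
  - case=> [/(anc_inl H2) aT2|[]]; last by rewrite (in_chain H1).
    by move: (disj aT); rewrite aT2.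
  - by case=> av ad; right; rewrite (in_chain H1).
have chT2 a : a \in tV T2 -> anc T a M <-> anc T2 a M.
  move=> aT; rewrite (A2 _ _ MT); split.
  - case=> // [[]]; rewrite (in_chain H1) => /(anc_inl H1) aT1.
    by move: (disj aT1); rewrite aT.
  - by left.
have cT1 y : y \in tV T1 -> 
   (comp T1 v1 y < d -> comp T M y = comp T1 v1 y) /\
   (d < comp T1 v1 y -> comp T M y = d).
  move=> yT; have [c1 c2 c3] := comp_spec H1 v1T yT.
  set e := comp T1 v1 y in c1 c2 c3 *.
  have bound a : anc T a M -> anc T a y -> (a <= e /\ a < d) \/ (a <= d /\ a < e).
    move=> aM ay; have := anc_inl I aM; rewrite spl_V => /orP [aT|aT].
    + have [av ad] := (chT1 _ aT).1 aM; left; split => //.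
      move: ay => /(A1 _ _ yT) [ay|[]]; first exact: c3.
      by rewrite (in_chain H2) => /(anc_inl H2) aT2; move: (disj aT); rewrite aT2.
    + have aM2 := (chT2 _ aT).1 aM; right.
      move: ay => /(A1 _ _ yT) [/(anc_inl H1) aT1|[]]; first by move: (disj aT1); rewrite aT.
      by rewrite (in_chain H2) => av lt; split => //; apply: d3.
  split => lt.
  + apply: (comp_char I).
    * by apply/(chT1 _ (anc_inl H1 c1)).
    * by apply/(A1 _ _ yT); left.
    * move=> a aM ay; case: (bound a aM ay) => [[]//|[_ ae]]; exact: ltnW.
  + apply: (comp_char I).
    * by apply/(chT2 _ dT).
    * by apply/(A1 _ _ yT); right; rewrite (in_chain H2).
    * move=> a aM ay; case: (bound a aM ay) => [[_ ad]|[]//]; exact: ltnW.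
have cT2 y : y \in tV T2 -> comp T M y = comp T2 M y.
  move=> yT; have [g1 g2 g3] := comp_spec H2 MT yT.
  have [f1 f2 f3] := comp_spec H2 v2T yT.
  apply: (comp_char I).
  - by apply/(chT2 _ (anc_inl H2 g1)).
  - by apply/(A2 _ _ yT); left.
  - move=> a aM ay; have := anc_inl I aM; rewrite spl_V => /orP [aT|aT].
    + have [av ad] := (chT1 _ aT).1 aM.
      move: ay => /(A2 _ _ yT) [/(anc_inl H2) aT2|[_ af]].
        by move: (disj aT); rewrite aT2.
      case: (leqP d (comp T2 v2 y)) => df.
      * have ad' : anc T2 d y := anc_trans H2 (chain_le H2 d1 f1 df) f2.
        exact: leq_trans (ltnW ad) (g3 _ d2 ad').
      * have fM : anc T2 (comp T2 v2 y) M := anc_trans H2 (chain_le H2 f1 d1 (ltnW df)) d2.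
        exact: leq_trans (ltnW af) (g3 _ fM f2).
    + have aM2 := (chT2 _ aT).1 aM.
      move: ay => /(A2 _ _ yT) [ay|[]]; first exact: g3.
      by rewrite (in_chain H1) => /(anc_inl H1) aT1; move: (disj aT1); rewrite aT.
rewrite /irreducible Mv.
pose conn := clos_refl_sym_trans nat (dep_edge P T M).
have [Dk dd Dsub DmT] := blk_ofT P2 R2 dT.
set D := blkof P d in Dk dd Dsub DmT.
have key b : 1 <= b <= k -> {subset blk P b <= tV T1} -> d < comp T1 v1 (mu P b) ->
    dep_edge P T M b D.
  move=> bk sb lt; have mT := sb _ (mu_in bk).
  split => //.
  - by move=> x /sb; apply: sub1.
  - rewrite (in_chain I); apply/negP => /(chT1 _ mT) [mv md].
    have [c1 c2 c3] := comp_spec H1 v1T mT.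
    have := anc_le H1 c2; lia.
  - by rewrite ((cT1 _ mT).2 lt).
have e1 i j : dep_edge P T1 v1 i j -> (conn i D <-> conn j D).
  case=> ik sub mc ->; have mT := sub _ (mu_in ik).
  have [c1 c2 c3] := comp_spec H1 v1T mT.
  set e := comp T1 v1 (mu P i) in c1 c2 c3 *.
  have eT := anc_inl H1 c1.
  have [jk ej sj mj] := blk_ofT P1 R1 eT.
  have ne : e != d by apply: contraTneq eT => ->; exact: disj2.
  case: (ltngtP e d) => [lt|lt|/eqP]; last by rewrite (negbTE ne).
  + have eij : dep_edge P T M i (blkof P e).
      split => //.
      * by move=> x /sub; apply: sub1.
      * rewrite (in_chain I); apply/negP => /(chT1 _ mT) [mv _].
        by move: mc; rewrite (in_chain H1) mv.
      * by rewrite ((cT1 _ mT).1 lt).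
    split => C.
    * apply: rst_trans C; apply: rst_sym; exact: rst_step.
    * apply: rst_trans C; exact: rst_step.
  + have iD := key i ik sub lt.
    have jD : dep_edge P T M (blkof P e) D.
      apply: key => //.
      have [cj1 cj2 cj3] := comp_spec H1 v1T mj.
      have emj : anc T1 e (mu P (blkof P e)).
        have := le_mu ej; rewrite leq_eqVlt => /orP [/eqP <-|elt].
        - exact: (anc_refl H1 eT).
        - by case: P1 => _ _ H; apply: H => //; rewrite (blkof_eq jk (mu_in jk)).
      exact: leq_trans lt (cj3 _ c1 emj).
    by split => _; apply: rst_step.
have T1D b : 1 <= b <= k -> {subset blk P b <= tV T1} -> conn b D.
  move=> bk sb.
  have [Bk vB sB mB] := blk_ofT P1 R1 v1T.
  have muB : mu P (blkof P v1) = v1.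
    by apply/eqP; rewrite eqn_leq (le_mu vB) b1.
  have BD : conn (blkof P v1) D.
    apply: rst_step; apply: key => //; rewrite muB.
    have [c1 c2 c3] := comp_spec H1 v1T v1T.
    have -> : comp T1 v1 v1 = v1 by apply/eqP; rewrite eqn_leq (anc_le H1 c2) c3 // (anc_refl H1 v1T).
    lia.
  have := irr1 _ _ bk Bk sb sB; rewrite Mv1.
  move=> C; suff : conn b D <-> conn (blkof P v1) D by move=> ->.
  elim: C {bk sb} => [x y /e1 //|x|x y _ IH|x y z _ IH1 _ IH2].
  - by [].
  - by rewrite IH.
  - by rewrite IH1 IH2.
have T2D b : 1 <= b <= k -> {subset blk P b <= tV T2} -> conn b D.
  move=> bk sb; have := irr2 _ _ bk Dk sb Dsub.
  apply: crst_mono => x y [xk sx mx ->]; split => //.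
  - by move=> z /sx; apply: sub2.
  - have mT := sx _ (mu_in xk).
    rewrite (in_chain I); apply/negP => /(chT2 _ mT); apply/negP.
    by rewrite -(in_chain H2).
  - by rewrite cT2 // (sx _ (mu_in xk)).
have TD b : 1 <= b <= k -> {subset blk P b <= tV T} -> conn b D.
  move=> bk sb; case: (spl_blk_split bk sb); [exact: T1D | exact: T2D].
move=> i j ik jk si sj.
have h1 := TD _ ik si; have h2 := TD _ jk sj; apply: rst_trans h1 _; exact: rst_sym.
Qed.

End SplP.
End Part.


Section Main.
Variables (r : nat) (P : seq (seq nat)).
Hypothesis HP : set_partition1 r P.
Local Notation k := (size P).

Section Chain.
Variable l : nat.
Hypothesis lk : 1 <= l <= k.
Local Notation b := (blk P l).
Local Notation T := (chain_tree b).

Lemma ct_inc : inc_tree T.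
Proof.
split.
- exact: (blk_ne HP lk).
- by apply/allP => x xb; have := blk_rng HP lk xb; case/andP.
- move=> x xb xr.
  have hs : has (fun a => a < x) b.
    apply/hasP; exists (troot T); first by apply: troot_mem; exact: (blk_ne HP lk).
    by rewrite ltn_neqAle eq_sym xr troot_le.
  by have [] := bigmax_ex hs.
Qed.

Lemma ct_anc a x : x \in b -> anc T a x <-> (a \in b /\ a <= x).
Proof.
move=> xb; apply: (linear_anc ct_inc) => //.
by apply: troot_mem; exact: (blk_ne HP lk).
Qed.

Lemma ct_pi : pi_incr P T.
Proof.
split; first exact: ct_inc.
- by move=> x xb; rewrite (blkof_eq HP lk xb).
- move=> i j ib jb _ lt; apply/ct_anc => //; split => //; exact: ltnW.
Qed.

Lemma ct_irr : irreducible P T.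
Proof.
move=> i j ik jk si sj.
have E1 := blkof_eq HP lk (si _ (mu_in HP ik)).
have E2 := blkof_eq HP lk (sj _ (mu_in HP jk)).
rewrite (blkof_eq HP ik (mu_in HP ik)) in E1.
rewrite (blkof_eq HP jk (mu_in HP jk)) in E2.
by rewrite E1 E2; apply: rst_refl.
Qed.

Lemma ct_rng : rng r T.
Proof. by move=> x xb; apply: (blk_rng HP lk xb). Qed.

End Chain.

Definition okl (i l : nat) := (l == 1) || (i <= l <= k).

Record Inv (i : nat) (s : cstate) : Prop := MkInv {
  iv_p1 : pi_incr P (taus s 1);
  iv_r1 : rng r (taus s 1);
  iv_nu : nu s \in tV (taus s 1);
  iv_lt1 : forall x, x \in tV (taus s 1) -> x < mu P i;
  iv_l : forall l, i <= l <= k ->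
    [/\ pi_incr P (taus s l), irreducible P (taus s l), rng r (taus s l),
        mu P l \in tV (taus s l) & forall x, x \in tV (taus s l) -> x <= mu P l];
  iv_disj : forall l l' x, okl i l -> okl i l' -> l != l' ->
    x \in tV (taus s l) -> x \notin tV (taus s l');
  iv_cov : forall x, 1 <= x <= r -> exists2 l, okl i l & x \in tV (taus s l);
  iv_red : t1spliced s -> ~ irreducible P (taus s 1)
}.

Hypothesis r2 : 2 <= r.

Lemma Inv_init : Inv 2 (init P).
Proof.
have [b1 k2] := blk1 HP r2.
have l1 : 1 <= 1 <= k by lia.
split => //=.
- exact: (ct_pi l1).
- exact: (ct_rng l1).
- move=> x xb; apply: leq_ltn_trans (le_mu xb) _; apply: (mu_lt HP) => //.
- move=> l lk; have lk' : 1 <= l <= k by lia.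
  split; [exact: (ct_pi lk') | exact: (ct_irr lk') | exact: (ct_rng lk') | exact: (mu_in HP lk') |].
  by move=> x xb; apply: le_mu.
- move=> l l' x ol ol' ne xb; apply/negP => xb'.
  have lk : 1 <= l <= k by move: ol; rewrite /okl; case/orP => [/eqP ->|]; lia.
  have lk' : 1 <= l' <= k by move: ol'; rewrite /okl; case/orP => [/eqP ->|]; lia.
  by move: ne; rewrite -(blkof_eq HP lk xb) -(blkof_eq HP lk' xb') eqxx.
- move=> x xr; have [bk xb] := blkofP HP xr; exists (blkof P x) => //.
  by rewrite /okl; case: (boolP (blkof P x == 1)) => //= ne; move/eqP: ne => ne; lia.
Qed.


Variable c : nat -> nat.
Hypothesis Hc : forall i, 2 <= i <= k.-1 -> 1 <= c i <= mu P i.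

Lemma arith_j a b f : a < b -> f < b - a -> a < a.+1 + f <= b.
Proof. lia. Qed.

Lemma Inv_step i s : 2 <= i -> i < k -> Inv i s -> Inv i.+1 (stage P c i s).
Proof.
move=> i2 ik [p1 r1 nu1 lt1 Hl Hd Hcov Hr].
have ik' : i <= i <= k by lia.
have [pi iri rgi mi bi] := Hl i ik'.
have oi : okl i i by rewrite /okl ik' orbT.
have o1 : okl i 1 by rewrite /okl eqxx.
have i1 : i != 1 by lia.
have dis : forall x, x \in tV (taus s i) -> x \notin tV (taus s 1).
  by move=> x; apply: Hd.
have mui : forall j, i < j <= k -> mu P i < mu P j.
  by move=> j /andP [ij jk]; apply: (mu_lt HP) => //; lia.
have ci : 1 <= c i <= mu P i by apply: Hc; lia.
have mir : mu P i <= r.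
  have ik1 : 1 <= i <= k by lia.
  by have := blk_rng HP ik1 (mu_in HP ik1); case/andP.
have cr : 1 <= c i <= r by lia.
rewrite /stage; case: ifP => C.
-
  have nlt : nu s < mu P i := lt1 _ nu1.
  have pT := spl_pi_incr HP pi p1 dis mi nu1 rgi r1.
  have rT := spl_rng (v1 := mu P i) (v2 := nu s) rgi r1.
  split => /=.
  + by rewrite /upd ?eqxx.
  + by rewrite /upd ?eqxx.
  + by rewrite mem_cat orbC.
  + move=> x; rewrite mem_cat => /orP [/bi xb|/lt1 xb].
    * apply: leq_ltn_trans xb _; apply: mui; lia.
    * apply: ltn_trans xb _; apply: mui; lia.
  + move=> l lk; rewrite /upd; have -> : (l == 1) = false by apply/negbTE; lia.
    apply: Hl; lia.
  + move=> l l' x ol ol' ne; rewrite /upd.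
    have okl_i j : okl i.+1 j -> okl i j.
      by rewrite /okl => /orP [->//|H]; apply/orP; right; lia.
    have nij j : okl i.+1 j -> i != j.
      by rewrite /okl => /orP [/eqP ->|H] //; lia.
    have ok1 := okl_i _ ol; have ok2 := okl_i _ ol'.
    have ni1 := nij _ ol; have ni2 := nij _ ol'.
    case: (eqVneq l 1) => [el|nl]; case: (eqVneq l' 1) => [el'|nl'].
    * by move: ne; rewrite el el'.
    * rewrite mem_cat => /orP [xi|x1].
      - by apply: Hd xi.
      - by apply: Hd x1 => //; rewrite eq_sym.
    * move=> xl; rewrite mem_cat negb_or; apply/andP; split.
      - by apply: Hd xl => //; rewrite eq_sym.
      - by apply: Hd xl.
    * by apply: Hd.
  + move=> x xr; have [l ol xl] := Hcov x xr.
    case: (eqVneq l 1) => [el|nl].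
    * by exists 1; rewrite /okl ?eqxx // /upd ?eqxx ?spl_V ?mem_cat -el xl orbT.
    case: (eqVneq l i) => [el|nli].
    * by exists 1; rewrite /okl ?eqxx // /upd ?eqxx ?spl_V ?mem_cat -el xl.
    * exists l; last by rewrite /upd (negbTE nl).
      by move: ol; rewrite /okl (negbTE nl) /=; lia.
  + move=> _; rewrite /upd ?eqxx; apply: (spl_reducible HP pi p1 dis mi nu1 rgi r1) => //.
-
  have ct1 : c i \notin tV (taus s 1) by apply/negP => H; rewrite H in C.
  have cti : c i \notin tV (taus s i) by apply/negP => H; rewrite H orbT in C.
  have [l ol cl] := Hcov _ cr.
  have l1 : l != 1 by apply: contraNneq ct1 => <-.
  have li : l != i by apply: contraNneq cti => E; move: cl; rewrite E.
  have lk : i < l <= k by move: ol; rewrite /okl (negbTE l1) /=; lia.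
  set pr := fun j => c i \in tV (taus s j).
  set j := i.+1 + find pr (iota i.+1 (k - i)).
  have hs : has pr (iota i.+1 (k - i)).
    apply/hasP; exists l => //; rewrite mem_iota; lia.
  have fk : find pr (iota i.+1 (k - i)) < k - i by move: hs; rewrite has_find size_iota.
  have cj : c i \in tV (taus s j).
    by have := nth_find 0 hs; rewrite nth_iota.
  have jk : i < j <= k by apply: arith_j.
  clearbody j.
  have j1 : j != 1 by clear -i2 jk; lia.
  have ji : j != i by clear -jk; lia.
  have jk' : i <= j <= k by clear -jk; lia.
  have [pj irj rgj mj bj] := Hl j jk'.
  have oj : okl i j by rewrite /okl jk' orbT.
  have disj : forall x, x \in tV (taus s i) -> x \notin tV (taus s j).
    by move=> x; apply: (Hd i j x oi oj); rewrite eq_sym.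
  have cmu : c i < mu P i.
    rewrite ltn_neqAle; case/andP: ci => _ ->; rewrite andbT.
    by apply: contraNneq cti => ->.
  have pT := spl_pi_incr HP pi pj disj mi cj rgi rgj.
  have rT := spl_rng (v1 := mu P i) (v2 := c i) rgi rgj.
  have Mj : maxv (taus s j) = mu P j by apply: maxv_char.
  have u1 : upd (taus s) j (spl (taus s i) (mu P i) (taus s j) (c i)) 1 = taus s 1.
    by rewrite /upd eq_sym (negbTE j1).
  split => /=; rewrite ?u1; [exact: p1|exact: r1|exact: nu1| | | | |exact: Hr].
  + move=> x /lt1 xl; apply: ltn_trans xl _; apply: mui; by rewrite ltnSn.
  + move=> l' lk'; rewrite /upd; case: (eqVneq l' j) => [->|nl'].
    * split => //.
      - apply: (spl_irreducible HP pi pj disj mi cj rgi rgj) => //.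
        by move=> x /bi xb; rewrite Mj; apply: leq_ltn_trans xb (mui _ jk).
      - by apply: sub2.
      - move=> x; rewrite spl_V => /orP [/bi xb|/bj //].
        by apply: leq_trans xb (ltnW (mui _ jk)).
    * apply: Hl; clear -lk'; lia.
  + move=> l1' l2' x ol1 ol2 ne; rewrite /upd.
    have okl_i j' : okl i.+1 j' -> okl i j'.
      by rewrite /okl => /orP [->//|H]; apply/orP; right; clear -H; lia.
    have nij j' : okl i.+1 j' -> i != j'.
      by rewrite /okl => /orP [/eqP ->|H]; [clear -i2; lia | clear -H; lia].
    have ok1 := okl_i _ ol1; have ok2 := okl_i _ ol2.
    have ni1 := nij _ ol1; have ni2 := nij _ ol2.
    case: (eqVneq l1' j) => [e1|n1]; case: (eqVneq l2' j) => [e2|n2].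
    * by move: ne; rewrite e1 e2 eqxx.
    * rewrite spl_V => /orP [xi|xj].
      - by apply: Hd xi.
      - by apply: (Hd j l2' x oj ok2) => //; rewrite eq_sym.
    * move=> xl; rewrite spl_V negb_or; apply/andP; split.
      - by apply: Hd xl => //; rewrite eq_sym.
      - by apply: (Hd l1' j x ok1 oj).
    * by apply: Hd.
  + move=> x xr; have [l' ol' xl'] := Hcov x xr.
    case: (eqVneq l' i) => [el|nli].
    * exists j; first by rewrite /okl jk orbT.
      by rewrite /upd eqxx spl_V; move: xl'; rewrite el => ->.
    case: (eqVneq l' j) => [el|nlj].
    * exists j; first by rewrite /okl jk orbT.
      by rewrite /upd eqxx spl_V; move: xl'; rewrite el => ->; rewrite orbT.
    * exists l'; last by rewrite /upd (negbTE nlj).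
      move: ol'; rewrite /okl; case/orP => [->//|H]; apply/orP; right.
      move/eqP: nli => nli; clear -H nli; lia.
Qed.

End Main.



Lemma state_before_S P c i : 2 <= i -> state_before P c i.+1 = stage P c i (state_before P c i).
Proof.
move=> i2; rewrite /state_before.
have -> : i.+1 - 2 = (i - 2) + 1 by lia.
rewrite iotaD foldl_cat /=.
by have -> : 2 + (i - 2) = i by lia.
Qed.

Lemma Inv_all r P c : set_partition1 r P -> 2 <= r ->
  (forall i, 2 <= i <= (size P).-1 -> 1 <= c i <= mu P i) ->
  forall i, 2 <= i <= size P -> Inv r P i (state_before P c i).
Proof.
move=> HP r2 Hc; elim => [|i IH] //.
case: (ltnP i 2) => i2 ik.
- have -> : i = 1 by lia.
  exact: Inv_init.
- rewrite state_before_S //; apply: (Inv_step HP r2 Hc) => //; first lia.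
  apply: IH; lia.
Qed.

Lemma Inv_final r P c : set_partition1 r P -> 2 <= size P ->
  Inv r P (size P) (state_before P c (size P)) ->
  pi_incr P (psi P c) /\ ~ irreducible P (psi P c).
Proof.
move=> HP k2 [p1 r1 nu1 lt1 Hl Hd _ _].
have kk : size P <= size P <= size P by rewrite leqnn.
have [pk ik rk mk bk] := Hl _ kk.
have ok : okl P (size P) (size P) by rewrite /okl kk orbT.
have o1 : okl P (size P) 1 by rewrite /okl eqxx.
have k1 : size P != 1 by move: k2; case: (size P) => [|[|]].
have dis : forall x, x \in tV (taus (state_before P c (size P)) (size P)) ->
   x \notin tV (taus (state_before P c (size P)) 1).
  by move=> x; apply: (Hd _ _ x ok o1 k1).
rewrite /psi; split.
- exact: (spl_pi_incr HP pk p1 dis mk nu1 rk r1).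
- apply: (spl_reducible HP pk p1 dis mk nu1 rk r1) => //; exact: lt1.
Qed.

Theorem proposition3p7 (r : nat) (P : seq (seq nat)) (c : nat -> nat) :
  2 <= r -> set_partition1 r P ->
  (forall i, 2 <= i <= (size P).-1 -> 1 <= c i <= mu P i) ->
  [/\ (forall l, 1 <= l <= size P ->
         pi_incr P (taus (init P) l) /\ irreducible P (taus (init P) l)),
      (forall i, 2 <= i <= size P ->
         (forall l, i <= l <= size P ->
            [/\ pi_incr P (taus (state_before P c i) l),
                irreducible P (taus (state_before P c i) l) &
                mu P l \in tV (taus (state_before P c i) l)]) /\
         (t1spliced (state_before P c i) ->
            pi_incr P (taus (state_before P c i) 1) /\
            ~ irreducible P (taus (state_before P c i) 1))) &
      pi_incr P (psi P c) /\ ~ irreducible P (psi P c)].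
Proof.
move=> r2 HP Hc; have [_ k2] := blk1 HP r2.
split.
- move=> l lk; split; [exact: (ct_pi HP lk) | exact: (ct_irr HP lk)].
- move=> i ik; have [p1 _ _ _ Hl _ _ Hr] := Inv_all HP r2 Hc ik; split.
  + by move=> l lk; have [? ? ? ? ?] := Hl l lk; split.
  + by move=> t; split => //; apply: Hr.
- apply: (Inv_final (r := r)) => //; apply: (Inv_all HP r2 Hc); by rewrite k2 leqnn.
Qed.
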